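(* For all $p, q, n \in \mathbb{N}$ with $p \le q$, $$u((p,q),n) \;=\; \sum_{i=0}^{n} \binom{p}{i}\binom{p+n-i}{p}\binom{q}{n-i}.$$
   Context: Let $\mathbb{N} = \{0,1,2,\dots\}$. For $(p,q) \in \mathbb{N}^2$ and $n \in \mathbb{N}$, an unrestricted generalized jump path of length $n$ starting at $(p,q)$ is a sequence $(x_0, \dots, x_n)$ of points of $\mathbb{N}^2$ satisfying three conditions: - $x_0 = (p,q)$; - for every $i$, each coordinate of $x_{i+1}$ is at most the corresponding coordinate of $x_i$; - $x_{i+1} \ne x_i$ for every $i$. Let $u((p,q),n)$ denote the number of such paths. Binomial coefficients satisfy $\binom{a}{b}=0$ if $b<0$ or $b>a$. *)

(* Defs.v *)
From mathcomp Require Import all_boot.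
Set Implicit Arguments. Unset Strict Implicit. Unset Printing Implicit Defensive.

(* A path (x_0,...,x_n) of points of N^2 is encoded as a finite function
   'I_n.+1 -> 'I_p.+1 * 'I_q.+1.  Bounding the coordinates by p and q loses
   nothing: since coordinates are nonincreasing and x_0 = (p,q), every point
   of an unrestricted generalized jump path lies in [0,p] x [0,q]. *)
Definition pt (p q : nat) := ('I_p.+1 * 'I_q.+1)%type.

Definition is_jump_path (p q n : nat) (x : {ffun 'I_n.+1 -> pt p q}) : bool :=
  [&& nat_of_ord (x ord0).1 == p,
      nat_of_ord (x ord0).2 == q &
      [forall i : 'I_n,
         [&& nat_of_ord (x (inord i.+1)).1 <= nat_of_ord (x (inord i)).1,
             nat_of_ord (x (inord i.+1)).2 <= nat_of_ord (x (inord i)).2 &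
             x (inord i.+1) != x (inord i)]]].

Definition u (p q n : nat) : nat := #|[set x : {ffun 'I_n.+1 -> pt p q} | @is_jump_path p q n x]|.

(* Main.v *)
Require Import Defs.
From mathcomp Require Import all_boot zify.
Set Implicit Arguments. Unset Strict Implicit. Unset Printing Implicit Defensive.

Lemma hockey j n a : \sum_(a' < a) 'C(a' + j, n) + 'C(j, n.+1) = 'C(a + j, n.+1).
Proof.
elim: a => [|a IH]; first by rewrite big_ord0.
by rewrite big_ord_recr /= addnAC IH addSn binS addnC.
Qed.

Lemma binid p n j : j <= n -> 'C(p, n - j) * 'C(p + j, p) = 'C(n, j) * 'C(p + j, n).
Proof.
move=> jn.
case: (leqP n (p + j)) => h; last first.
  by rewrite (@bin_small p (n - j)) ?(@bin_small (p+j) n) ?muln0 ?mul0n //; lia.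
have K : 0 < j`! * (n - j)`! * (p + j - n)`! by rewrite !muln_gt0 !fact_gt0.
apply/eqP; rewrite -(eqn_pmul2r K); apply/eqP.
have e1 : p - (n - j) = p + j - n by lia.
have e2 : p + j - p = j by lia.
have e3 : n - j <= p by lia.
transitivity ('C(p + j, p) * (p`! * (p + j - p)`!)).
  rewrite -(bin_fact e3) e1 e2. rewrite !mulnA. lia.
rewrite bin_fact ?leq_addr //.
rewrite -(bin_fact h) -(bin_fact jn). lia.
Qed.

Fixpoint W n a b : nat :=
  match n with
  | 0 => 1
  | n'.+1 => \sum_(a' < a.+1) \sum_(b' < b.+1) ((a' : nat, b' : nat) != (a, b)) * W n' a' b'
  end.

Definition F n a b := \sum_(j < n.+1) 'C(n, j) * 'C(b, j) * 'C(a + j, n).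

Lemma W_F n a b : W n a b = F n a b.
Proof.
elim: n a b => [|n IH] a b.
  by rewrite /F big_ord_recr big_ord0 /= !bin0.
rewrite /=.
under eq_bigr => a' _ do under eq_bigr => b' _ do rewrite IH.
have -> : \sum_(a' < a.+1) \sum_(b' < b.+1) ((a' : nat, b' : nat) != (a, b)) * F n a' b'
   = \sum_(a' < a.+1) \sum_(b' < b) F n a' b' + \sum_(a' < a) F n a' b.
  rewrite [X in _ = _ + X](_ : _ = \sum_(a' < a.+1) ((a' : nat, b) != (a, b)) * F n a' b).
    rewrite -big_split /=; apply: eq_bigr => a' _.
    rewrite big_ord_recr /=; congr (_ + _); apply: eq_bigr => b' _.
    by rewrite xpair_eqE (ltn_eqF (ltn_ord b')) andbF mul1n.
  rewrite big_ord_recr /= eqxx mul0n addn0; apply: eq_bigr => a' _.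
  by rewrite xpair_eqE (ltn_eqF (ltn_ord a')) mul1n.
have S2 : \sum_(a' < a) F n a' b = \sum_(j < n.+1) 'C(n, j) * 'C(b, j) * 'C(a + j, n.+1).
  rewrite /F exchange_big /=; apply: eq_bigr => j _.
  rewrite -big_distrr /= -(hockey j n a) (@bin_small j n.+1) ?addn0 //.
have S1 : \sum_(a' < a.+1) \sum_(b' < b) F n a' b'
   = \sum_(j < n.+1) 'C(n, j) * 'C(b, j.+1) * 'C(a.+1 + j, n.+1).
  rewrite /F. under eq_bigr => a' _ do rewrite exchange_big /=.
  rewrite exchange_big /=; apply: eq_bigr => j _.
  rewrite -(hockey j n a.+1) (@bin_small j n.+1) ?addn0 //.
  have H0 : \sum_(b' < b) 'C(b', j) = 'C(b, j.+1).
    rewrite -[b in RHS]addn0 -hockey bin0n /= addn0.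
    by apply: eq_bigr => b' _; rewrite addn0.
  rewrite -H0 [RHS]mulnC big_distrl /=; apply: eq_bigr => a' _.
  rewrite !big_distrr /=; apply: eq_bigr => b' _.
  by rewrite mulnC.
rewrite S1 S2 /F [RHS]big_ord_recl /=.
under [X in _ = _ + X]eq_bigr => k _ do rewrite /bump /= add1n binS !mulnDl.
rewrite big_split /= addnA addnC; congr (_ + _); last first.
  by apply: eq_bigr => k _; rewrite addSnnS.
rewrite [in RHS]big_ord_recr /= (@bin_small n n.+1) // !mul0n addn0.
rewrite big_ord_recl /= !bin0.
by rewrite addn0 addn0; congr (_ + _); apply: eq_bigr => k _; rewrite /bump /= add1n.
Qed.

Lemma formula_F p q n :
  \sum_(0 <= i < n.+1) 'C(p, i) * 'C(p + n - i, p) * 'C(q, n - i) = F n p q.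
Proof.
rewrite big_rev_mkord subn0 /F; apply: eq_bigr => j _.
have jn : j <= n by rewrite -ltnS.
rewrite subSS (subKn jn) (_ : p + n - (n - j) = p + j); last by lia.
by rewrite (@binid p n j jn) mulnAC.
Qed.

Definition rel p q (s t : pt p q) : bool :=
  [&& (nat_of_ord t.1) <= s.1, (nat_of_ord t.2) <= s.2 & t != s].
Definition steps p q n (x : {ffun 'I_n.+1 -> pt p q}) : bool :=
  [forall i : 'I_n, rel (x (inord i)) (x (inord i.+1))].
Definition X p q n (s : pt p q) :=
  [set x : {ffun 'I_n.+1 -> pt p q} | (x ord0 == s) && steps x].
Definition cons p q n (s : pt p q) (y : {ffun 'I_n.+1 -> pt p q}) : {ffun 'I_n.+2 -> pt p q} :=
  [ffun i : 'I_n.+2 => if nat_of_ord i is k.+1 then y (inord k) else s].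
Definition tail p q n (x : {ffun 'I_n.+2 -> pt p q}) : {ffun 'I_n.+1 -> pt p q} :=
  [ffun j : 'I_n.+1 => x (inord j.+1)].

Lemma inord0 m : inord 0 = ord0 :> 'I_m.+1.
Proof. by apply: val_inj; rewrite /= inordK. Qed.

Lemma stepsP p q n (x : {ffun 'I_n.+1 -> pt p q}) :
  reflect (forall k, k < n -> rel (x (inord k)) (x (inord k.+1))) (steps x).
Proof.
apply: (iffP forallP) => H k; first by move=> kn; exact: (H (Ordinal kn)).
exact: (H k (ltn_ord k)).
Qed.

Lemma cons0 p q n s y : @cons p q n s y ord0 = s.
Proof. by rewrite ffunE. Qed.

Lemma consS p q n s y k : k <= n -> @cons p q n s y (inord k.+1) = y (inord k).
Proof. by move=> kn; rewrite ffunE inordK. Qed.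

Lemma cons_inj p q n s : injective (@cons p q n s).
Proof.
move=> y1 y2 e; apply/ffunP => j.
have h := congr1 (fun f : {ffun _ -> _} => f (inord j.+1)) e.
have jn : (j : nat) <= n by rewrite -ltnS.
rewrite /= !consS // in h.
by rewrite -(inord_val j).
Qed.

Lemma steps_cons p q n s y : steps (@cons p q n s y) = rel s (y ord0) && steps y.
Proof.
apply/stepsP/andP => [H|[H0 /stepsP H] [|k] kn].
- split; first by have := H 0 (ltn0Sn n); rewrite inord0 cons0 consS // inord0.
  apply/stepsP => k kn.
  by have := H k.+1 kn; rewrite !consS // ltnW.
- by rewrite inord0 cons0 consS // inord0.
- by rewrite !consS // ?H // ltnW.
Qed.

Lemma tailK p q n (x : {ffun 'I_n.+2 -> pt p q}) : x = cons (x ord0) (tail x).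
Proof.
apply/ffunP => i; rewrite ffunE; case: i => [[|k] Hk] /=.
  by congr (x _); apply: val_inj.
rewrite ffunE inordK //; congr (x _); apply: val_inj; rewrite /= inordK //.
Qed.

Lemma card_sum (T : finType) (P : pred T) : #|[set x | P x]| = \sum_x (P x : nat).
Proof.
rewrite -sum1_card big_mkcond /=; apply: eq_bigr => x _.
by rewrite inE; case: (P x).
Qed.

Lemma X_S p q n (s : pt p q) :
  X n.+1 s = cons s @: [set y : {ffun 'I_n.+1 -> pt p q} | rel s (y ord0) && steps y].
Proof.
apply/setP => x; rewrite !inE; apply/andP/imsetP.
- move=> [/eqP x0 st]; exists (tail x); last by rewrite -x0 -tailK.
  by rewrite inE -steps_cons -x0 -tailK.
- move=> [y]; rewrite inE => /andP [h1 h2] ->.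
  by rewrite cons0 eqxx steps_cons h1 h2.
Qed.

Lemma narrow m s (g : nat -> nat) : s <= m ->
  \sum_(a < m.+1) (a <= s) * g a = \sum_(a < s.+1) g a.
Proof.
move=> sm.
rewrite -(big_mkord xpredT (fun a => (a <= s) * g a)) -(big_mkord xpredT g).
rewrite (big_cat_nat _ (n := s.+1)) //= [X in _ + X]big1_seq ?addn0.
  by apply: eq_big_nat => a /andP [_ ha]; rewrite -ltnS ha mul1n.
by move=> a /andP [_]; rewrite mem_index_iota => /andP [ha _]; rewrite leqNgt ha.
Qed.

Lemma card_X p q n (s : pt p q) : #|X n s| = W n s.1 s.2.
Proof.
elim: n s => [|n IH] s.
  rewrite /= (_ : X 0 s = [set [ffun => s]]) ?cards1 //.
  apply/setP => x; rewrite !inE; apply/andP/eqP.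
    by move=> [/eqP x0 _]; apply/ffunP => i; rewrite ffunE (ord1 i).
  move=> ->; split; first by rewrite ffunE.
  by apply/forallP => -[].
rewrite X_S card_imset; last exact: cons_inj.
rewrite card_sum.
have E : forall y : {ffun 'I_n.+1 -> pt p q}, (rel s (y ord0) && steps y : nat)
    = \sum_(t : pt p q) (rel s t * ((y ord0 == t) && steps y)).
  move=> y; rewrite (bigD1 (y ord0)) //= eqxx /= big1 ?addn0.
    by case: (rel _ _); case: (steps y).
  by move=> t; rewrite eq_sym => /negbTE ->; rewrite muln0.
rewrite (eq_bigr _ (fun y _ => E y)) exchange_big /=.
under eq_bigr => t _ do rewrite -big_distrr /= -card_sum IH.
rewrite -(pair_bigA _ (fun (a : 'I_p.+1) (b : 'I_q.+1) => rel s (a, b) * W n a b)) /=.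
clear E; case: s => s1 s2 /=.
have -> : \sum_(a < p.+1) \sum_(b < q.+1) rel (s1, s2) (a, b) * W n a b =
   \sum_(a < p.+1) (a <= s1) * \sum_(b < q.+1) (b <= s2) *
        (((a : nat, b : nat) != (s1 : nat, s2 : nat)) * W n a b).
  apply: eq_bigr => a _; rewrite big_distrr /=; apply: eq_bigr => b _.
  rewrite /rel /= !xpair_eqE.
  case: (a <= s1); case: (b <= s2); rewrite /= ?mul0n ?mul1n //.
pose G := fun a : nat => \sum_(b' < s2.+1) (((a, b' : nat)) != (s1 : nat, s2 : nat)) * W n a b'.
transitivity (\sum_(a < p.+1) (a <= s1) * G a); last exact: (narrow G (leq_ord s1)).
apply: eq_bigr => a _; congr (_ * _).
pose H := fun b : nat => ((a : nat, b) != (s1 : nat, s2 : nat)) * W n a b.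
exact: (narrow H (leq_ord s2)).
Qed.

Theorem mainTheorem10 (p q n : nat) :
  p <= q ->
  u p q n = \sum_(0 <= i < n.+1) 'C(p, i) * 'C(p + n - i, p) * 'C(q, n - i).
Proof.
move=> _.
rewrite formula_F -W_F.
have -> : u p q n = #|@X p q n (ord_max, ord_max)|.
  rewrite /u /X; apply: eq_card => x; rewrite !inE /is_jump_path /steps /rel.
  rewrite andbA; congr (_ && _); case: (x ord0) => a b; rewrite xpair_eqE; done.
exact: card_X.
Qed.
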